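(* Let $t$ be a term of the silly substitution calculus. If $t\to_w^* n$ with $n$ a $\to_w$-normal term, then there is a derivation $\pi\triangleright\Gamma\vdash t:\mathtt{n}$ in the silly multi type system, for some type context $\Gamma$.
   Context: Terms: $t ::= x \mid \lambda x.t \mid t\,u \mid t[x\backslash u]$ ($t[x\backslash u]$ an explicit substitution binding $x$ in $t$; terms up to $\alpha$). Values $v ::= \lambda x.t$. Substitution contexts $S ::= \langle\cdot\rangle\mid S[x\backslash u]$. Weak contexts $W ::= \langle\cdot\rangle \mid W\,t \mid t\,W \mid t[x\backslash W] \mid W[x\backslash u]$; $W\langle\langle t\rangle\rangle$ is plugging without capture of free variables of $t$. Root rules: $S\langle\lambda x.t\rangle u\mapsto_m S\langle t[x\backslash u]\rangle$; $W\langle\langle x\rangle\rangle[x\backslash u]\mapsto_e W\langle\langle u\rangle\rangle[x\backslash u]$; $t[x\backslash S\langle v\rangle]\mapsto_{gcv} S\langle t\rangle$ if $x\notin\mathrm{fv}(t)$. $\to_w$ is the union of their closures under weak contexts. Silly multi types: linear types $L ::= \mathtt{n} \mid M\multimap L$; multi types $M ::= [L_i]_{i\in I}$ finite multisets ($\mathbf{0}$ empty, $\uplus$ sum). Type contexts $\Gamma$ map variables to multi types with finite support; $\uplus$ pointwise; $\Gamma\setminus\!\!\setminus x$ sets $x$ to $\mathbf{0}$. Judgements $\Gamma\vdash^{(m,e)} t:T$ ($\Gamma\vdash t:T$ when indices are irrelevant). Rules: (ax) $x:[L]\vdash^{(0,1)} x:L$; (many) from $(\Gamma_i\vdash^{(m_i,e_i)}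 t : L_i)_{i\in I}$, $I$ finite possibly empty, infer $\uplus_i\Gamma_i\vdash^{(\sum m_i,\sum e_i)} t : [L_i]_{i\in I}$; ($\mathrm{ax}_\lambda$) $\vdash^{(0,0)}\lambda x.t:\mathtt{n}$; ($\lambda$) from $\Gamma\vdash^{(m,e)}t:L$ infer $\Gamma\setminus\!\!\setminus x\vdash^{(m,e)}\lambda x.t:\Gamma(x)\multimap L$; (@) from $\Gamma\vdash^{(m,e)} t : M\multimap L$ and $\Delta\vdash^{(m',e')} u : M\uplus[\mathtt{n}]$ infer $\Gamma\uplus\Delta\vdash^{(m+m'+1,e+e')} tu : L$; (ES) from $\Gamma\vdash^{(m,e)} t:L$ and $\Delta\vdash^{(m',e')}u:\Gamma(x)\uplus[\mathtt{n}]$ infer $(\Gamma\setminus\!\!\setminus x)\uplus\Delta\vdash^{(m+m',e+e')} t[x\backslash u]:L$. *)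

(* Defs.v *)
From Stdlib Require Import List Permutation Arith.
Import ListNotations.

(* ---------- Terms (de Bruijn) ----------
   Es t u  represents  t[x\u]  where x is index 0 in t; u lives outside. *)
Inductive term : Type :=
| Var : nat -> term
| Lam : term -> term
| App : term -> term -> term
| Es  : term -> term -> term.

Fixpoint lift (d c : nat) (t : term) : term :=
  match t with
  | Var k => if k <? c then Var k else Var (k + d)
  | Lam b => Lam (lift d (S c) b)
  | App a b => App (lift d c a) (lift d c b)
  | Es a b => Es (lift d (S c) a) (lift d c b)
  end.

(* lower c t : decrement every free index > c (index c assumed not free) *)
Fixpoint lower (c : nat) (t : term) : term :=
  match t with
  | Var k => if k <=? c then Var k else Var (k - 1)
  | Lam b => Lam (lower (S c) b)
  | App a b => App (lower c a) (lower c b)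
  | Es a b => Es (lower (S c) a) (lower c b)
  end.

Fixpoint occurs (k : nat) (t : term) : bool :=
  match t with
  | Var j => j =? k
  | Lam b => occurs (S k) b
  | App a b => occurs k a || occurs k b
  | Es a b => occurs (S k) a || occurs k b
  end.

Definition is_value (t : term) : Prop := exists b, t = Lam b.

(* Substitution contexts S ::= <.> | S[x\u], as the list of the ES
   arguments, innermost first: plugS [u1;..;un] t = t[x1\u1]...[xn\un]. *)
Definition sctx := list term.
Fixpoint plugS (S : sctx) (t : term) : term :=
  match S with
  | [] => t
  | u :: S' => plugS S' (Es t u)
  end.

Inductive wctx : Type :=
| WHole : wctx
| WAppL : wctx -> term -> wctx
| WAppR : term -> wctx -> wctx
| WEsArg : term -> wctx -> wctx
| WEsBody : wctx -> term -> wctx.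

Fixpoint plugW (W : wctx) (t : term) : term :=
  match W with
  | WHole => t
  | WAppL W' u => App (plugW W' t) u
  | WAppR u W' => App u (plugW W' t)
  | WEsArg u W' => Es u (plugW W' t)
  | WEsBody W' u => Es (plugW W' t) u
  end.

Fixpoint bdepth (W : wctx) : nat :=
  match W with
  | WHole => 0
  | WAppL W' _ => bdepth W'
  | WAppR _ W' => bdepth W'
  | WEsArg _ W' => bdepth W'
  | WEsBody W' _ => S (bdepth W')
  end.

Inductive root : term -> term -> Prop :=
| root_m : forall (S : sctx) (t u : term),
    root (App (plugS S (Lam t)) u)
         (plugS S (Es t (lift (length S) 0 u)))
| root_e : forall (W : wctx) (u : term),
    (* W<<x>>[x\u] -> W<<u>>[x\u] *)
    root (Es (plugW W (Var (bdepth W))) u)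
         (Es (plugW W (lift (S (bdepth W)) 0 u)) u)
| root_gcv : forall (S : sctx) (t v : term),
    is_value v -> occurs 0 t = false ->
    root (Es t (plugS S v))
         (plugS S (lift (length S) 0 (lower 0 t))).

Definition wstep (t t' : term) : Prop :=
  exists (W : wctx) (r r' : term),
    root r r' /\ t = plugW W r /\ t' = plugW W r'.

Inductive wstar : term -> term -> Prop :=
| wstar_refl : forall t, wstar t t
| wstar_step : forall t t' t'', wstep t t' -> wstar t' t'' -> wstar t t''.

Definition wnormal (t : term) : Prop := ~ exists t', wstep t t'.

(* ---------- Silly multi types ----------
   Multi types are finite multisets, represented as lists taken up to
   (deep) permutation, see [teq]/[meq]. *)
Inductive ltype : Type :=
| Tn : ltype
| Arr : list ltype -> ltype -> ltype.

Definition mtype := list ltype.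

Inductive teq : ltype -> ltype -> Prop :=
| teq_n : teq Tn Tn
| teq_arr : forall (M M'' M' : mtype) (L L' : ltype),
    Permutation M M'' -> Forall2 teq M'' M' -> teq L L' ->
    teq (Arr M L) (Arr M' L').

Definition meq (M M' : mtype) : Prop :=
  exists M'', Permutation M M'' /\ Forall2 teq M'' M'.

(* type contexts: index -> multi type (finite support is automatic for
   derivable judgements) *)
Definition tctx := nat -> mtype.
Definition cempty : tctx := fun _ => [].
Definition csum (G D : tctx) : tctx := fun k => G k ++ D k.
Definition csingle (x : nat) (M : mtype) : tctx :=
  fun k => if k =? x then M else [].
(* removal of the binder's variable (index 0) and unshifting *)
Definition cpop (G : tctx) : tctx := fun k => G (S k).

(* Judgements  G |-^(m,e) t : L  and  G |-^(m,e) t : M *)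
Inductive lty : tctx -> term -> ltype -> nat -> nat -> Prop :=
| ty_ax : forall x L, lty (csingle x [L]) (Var x) L 0 1
| ty_axlam : forall t, lty cempty (Lam t) Tn 0 0
| ty_lam : forall G t L m e,
    lty G t L m e -> lty (cpop G) (Lam t) (Arr (G 0) L) m e
| ty_app : forall G D t u M L Mu m e m' e',
    lty G t (Arr M L) m e -> mty D u Mu m' e' -> meq Mu (M ++ [Tn]) ->
    lty (csum G D) (App t u) L (m + m' + 1) (e + e')
| ty_es : forall G D t u L Mu m e m' e',
    lty G t L m e -> mty D u Mu m' e' -> meq Mu (G 0 ++ [Tn]) ->
    lty (csum (cpop G) D) (Es t u) L (m + m') (e + e')
with mty : tctx -> term -> mtype -> nat -> nat -> Prop :=
| ty_many_nil : forall t, mty cempty t [] 0 0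
| ty_many_cons : forall G D t L M m e m' e',
    lty G t L m e -> mty D t M m' e' ->
    mty (csum G D) t (L :: M) (m + m') (e + e').

(* Main.v *)
Require Import Defs.
From Stdlib Require Import List Permutation Arith Lia ClassicalEpsilon FunctionalExtensionality Classical.
Import ListNotations.

Scheme lty_ind' := Induction for lty Sort Prop
with mty_ind' := Induction for mty Sort Prop.
Combined Scheme lty_mty_ind from lty_ind', mty_ind'.

Definition dec (x y : ltype) : {x = y} + {x <> y} := excluded_middle_informative (x = y).
Definition cnt (l : list ltype) (x : ltype) : nat := count_occ dec l x.

Lemma cnt_app l1 l2 x : cnt (l1 ++ l2) x = cnt l1 x + cnt l2 x.
Proof. apply count_occ_app. Qed.
Lemma cnt_nil x : cnt [] x = 0.
Proof. reflexivity. Qed.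
Lemma cnt_perm l1 l2 : (forall x, cnt l1 x = cnt l2 x) -> Permutation l1 l2.
Proof. intros H. apply (Permutation_count_occ dec). exact H. Qed.
Lemma cnt_nil_inv l : (forall x, cnt l x = 0) -> l = [].
Proof. intros H. apply (count_occ_inv_nil dec). exact H. Qed.

Fixpoint teq_refl (L : ltype) : teq L L :=
  match L with
  | Tn => teq_n
  | Arr M L' => teq_arr M M M L' L' (Permutation_refl M)
      ((fix f (l : list ltype) : Forall2 teq l l :=
          match l with
          | [] => Forall2_nil _
          | a :: l' => Forall2_cons _ _ (teq_refl a) (f l')
          end) M) (teq_refl L')
  end.

Lemma Forall2_teq_refl l : Forall2 teq l l.
Proof. induction l; constructor; auto using teq_refl. Qed.

Lemma meq_trans_perm A B B' : meq A B -> (forall x, cnt B x = cnt B' x) -> meq A B'.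
Proof.
  intros [M [HP HF]] Hc. apply cnt_perm in Hc.
  apply Forall2_flip in HF.
  destruct (Permutation_Forall2 Hc HF) as [M' [HP' HF']].
  exists M'. split. eapply Permutation_trans; eauto. apply Forall2_flip; auto.
Qed.

Lemma meq_app A B C : meq A B -> meq (A ++ C) (B ++ C).
Proof.
  intros [M [HP HF]]. exists (M ++ C). split.
  apply Permutation_app_tail; auto. apply Forall2_app; auto using Forall2_teq_refl.
Qed.

Lemma meq_nn : meq [Tn] ([] ++ [Tn]).
Proof. exists [Tn]. split; [reflexivity | simpl; repeat constructor]. Qed.

Definition ceq (G G' : tctx) := forall k x, cnt (G k) x = cnt (G' k) x.

Definition popn (d : nat) (G : tctx) : tctx := fun k => G (k + d).
Definition rem (n c : nat) (K : tctx) : tctx := fun k => if k <? c then K k else K (k + n).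
Definition ins (c : nat) (G : tctx) : tctx :=
  fun k => if k <? c then G k else if k =? c then [] else G (k - 1).

Lemma lift_0 : forall t c, lift 0 c t = t.
Proof.
  induction t; intros c; simpl; try (f_equal; auto; fail).
  destruct (n <? c); f_equal; lia.
Qed.

Lemma lift_lift : forall t a b c, lift a c (lift b c t) = lift (a + b) c t.
Proof.
  induction t; intros a b c; simpl; try (f_equal; auto; fail).
  destruct (n <? c) eqn:E; simpl. rewrite E; auto.
  destruct (n + b <? c) eqn:E2. apply Nat.ltb_lt in E2; apply Nat.ltb_ge in E; lia.
  f_equal; lia.
Qed.

Lemma lift_lower : forall t c, occurs c t = false -> lift 1 c (lower c t) = t.
Proof.
  induction t; intros c H; simpl in *.
  - destruct (n <=? c) eqn:E; simpl.
    + apply Nat.leb_le in E. apply Nat.eqb_neq in H.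
      destruct (n <? c) eqn:E2; auto. apply Nat.ltb_ge in E2; lia.
    + apply Nat.leb_gt in E. destruct (n - 1 <? c) eqn:E2.
      apply Nat.ltb_lt in E2; lia. f_equal; lia.
  - f_equal; auto.
  - apply Bool.orb_false_iff in H as [H1 H2]. f_equal; auto.
  - apply Bool.orb_false_iff in H as [H1 H2]. f_equal; auto.
Qed.

Lemma plugS_app : forall S s x, plugS (S ++ [s]) x = Es (plugS S x) s.
Proof. induction S; intros; simpl; auto. Qed.


Ltac fext := apply functional_extensionality; intro.

Ltac nat_cases := repeat match goal with
 | |- context [?a <? ?b] => let E := fresh "E" in destruct (a <? b) eqn:E; [apply Nat.ltb_lt in E | apply Nat.ltb_ge in E]
 | |- context [?a =? ?b] => let E := fresh "E" in destruct (a =? b) eqn:E; [apply Nat.eqb_eq in E | apply Nat.eqb_neq in E]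
 | |- context [?a <=? ?b] => let E := fresh "E" in destruct (a <=? b) eqn:E; [apply Nat.leb_le in E | apply Nat.leb_gt in E]
 end; try lia; auto; try (f_equal; lia).

Lemma ins_cempty c : ins c cempty = cempty.
Proof. fext. unfold ins, cempty. nat_cases. Qed.
Lemma ins_csum c G D : ins c (csum G D) = csum (ins c G) (ins c D).
Proof. fext. unfold ins, csum. nat_cases. Qed.
Lemma ins_cpop c G : ins c (cpop G) = cpop (ins (S c) G).
Proof. fext. unfold ins, cpop. nat_cases. Qed.
Lemma ins_csingle c x M : ins c (csingle x M) = csingle (if x <? c then x else x + 1) M.
Proof. fext. unfold ins, csingle. nat_cases. Qed.

Lemma ins_lift :
  (forall G t L m e, lty G t L m e -> forall c, lty (ins c G) (lift 1 c t) L m e) /\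
  (forall G t M m e, mty G t M m e -> forall c, mty (ins c G) (lift 1 c t) M m e).
Proof.
  apply (lty_mty_ind (fun G t L m e _ => forall c, lty (ins c G) (lift 1 c t) L m e)
                     (fun G t M m e _ => forall c, mty (ins c G) (lift 1 c t) M m e));
  intros.
  all: try (rewrite ins_csingle; simpl; destruct (x <? c); constructor).
  all: try (rewrite ins_cempty; constructor).
  all: try (rewrite ins_cpop; simpl;
            replace (G 0) with (ins (S c) G 0) by (unfold ins; reflexivity); constructor; auto).
  all: try (rewrite ins_csum; simpl; econstructor; eauto).
  all: try (rewrite ins_csum, ins_cpop; simpl; econstructor; eauto).
Qed.

Lemma rem_cempty n c : rem n c cempty = cempty.
Proof. fext. unfold rem, cempty. nat_cases. Qed.
Lemma rem_csum n c G D : rem n c (csum G D) = csum (rem n c G) (rem n c D).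
Proof. fext. unfold rem, csum. nat_cases. Qed.
Lemma rem_cpop n c G : rem n c (cpop G) = cpop (rem n (S c) G).
Proof. fext. unfold rem, cpop. nat_cases. Qed.
Lemma rem_csingle n c k M :
  rem n c (csingle (if k <? c then k else k + n) M) = csingle k M.
Proof. fext. unfold rem, csingle. nat_cases. Qed.

Lemma unlift_m : forall u n c,
  (forall K L m e, lty K (lift n c u) L m e ->
     (forall k, c <= k -> k < c + n -> K k = []) /\ lty (rem n c K) u L m e) ->
  forall K M m e, mty K (lift n c u) M m e ->
     (forall k, c <= k -> k < c + n -> K k = []) /\ mty (rem n c K) u M m e.
Proof.
  intros u n c IH K M m e H. remember (lift n c u) as t eqn:Et.
  induction H; subst.
  - split. intros; reflexivity. rewrite rem_cempty; constructor.
  - destruct (IH _ _ _ _ H) as [A1 A2]. destruct IHmty as [B1 B2]; auto.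
    split. intros k Hk1 Hk2. unfold csum. rewrite A1, B1; auto; lia.
    rewrite rem_csum. constructor; auto.
Qed.

Lemma unlift : forall u n c K L m e, lty K (lift n c u) L m e ->
  (forall k, c <= k -> k < c + n -> K k = []) /\ lty (rem n c K) u L m e.
Proof.
  induction u; intros n0 c K L m e H; simpl in H.
  - destruct (n <? c) eqn:E; pose proof E as E'; [apply Nat.ltb_lt in E' | apply Nat.ltb_ge in E'];
    inversion H; subst.
    + split. intros k Hk1 Hk2. unfold csingle. nat_cases.
      pose proof (rem_csingle n0 c n [L]) as R. rewrite E in R. rewrite R. constructor.
    + split. intros k Hk1 Hk2. unfold csingle. nat_cases.
      pose proof (rem_csingle n0 c n [L]) as R. rewrite E in R. rewrite R. constructor.
  - inversion H; subst.
    + split. intros; reflexivity. rewrite rem_cempty; constructor.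
    + match goal with Hx : lty _ (lift _ _ u) _ _ _ |- _ => destruct (IHu _ _ _ _ _ _ Hx) as [A1 A2] end. split.
      intros k Hk1 Hk2. unfold cpop. apply A1; lia.
      rewrite rem_cpop. replace (G 0) with (rem n0 (S c) G 0) by (unfold rem; reflexivity).
      constructor; auto.
  - inversion H; subst.
    match goal with Hx : lty _ (lift _ _ u1) _ _ _ |- _ => destruct (IHu1 _ _ _ _ _ _ Hx) as [A1 A2] end.
    match goal with Hx : mty _ (lift _ _ u2) _ _ _ |- _ => destruct (unlift_m u2 n0 c (IHu2 n0 c) _ _ _ _ Hx) as [B1 B2] end.
    split. intros k Hk1 Hk2. unfold csum. rewrite A1, B1; auto; lia.
    rewrite rem_csum. econstructor; eauto.
  - inversion H; subst.
    match goal with Hx : lty _ (lift _ _ u1) _ _ _ |- _ => destruct (IHu1 _ _ _ _ _ _ Hx) as [A1 A2] end.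
    match goal with Hx : mty _ (lift _ _ u2) _ _ _ |- _ => destruct (unlift_m u2 n0 c (IHu2 n0 c) _ _ _ _ Hx) as [B1 B2] end.
    split. intros k Hk1 Hk2. unfold csum, cpop. rewrite A1, B1; auto; lia.
    rewrite rem_csum, rem_cpop. econstructor; eauto.
Qed.

Lemma unlift_mty : forall u n c K M m e, mty K (lift n c u) M m e ->
  (forall k, c <= k -> k < c + n -> K k = []) /\ mty (rem n c K) u M m e.
Proof. intros u n c. apply unlift_m. intros; eapply unlift; eauto. Qed.

Definition Exp (a b : term) := forall G L m e, lty G b L m e ->
  exists G' m' e', lty G' a L m' e' /\ ceq G' G.

Lemma ceq_refl G : ceq G G.
Proof. intros k x; reflexivity. Qed.

Lemma Exp_m a b : Exp a b -> forall G M m e, mty G b M m e ->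
  exists G' m' e', mty G' a M m' e' /\ ceq G' G.
Proof.
  intros HE G M m e H. induction H.
  - exists cempty, 0, 0. split. constructor. apply ceq_refl.
  - destruct (HE _ _ _ _ H) as (G1 & m1 & e1 & A1 & A2).
    destruct (IHmty HE) as (D1 & m2 & e2 & B1 & B2).
    exists (csum G1 D1), (m1 + m2), (e1 + e2). split. constructor; auto.
    intros k x. unfold csum. rewrite !cnt_app, A2, B2. reflexivity.
Qed.

Lemma exp_m : forall S t u, Exp (App (plugS S (Lam t)) u) (plugS S (Es t (lift (length S) 0 u))).
Proof.
  intros S t. induction S using rev_ind; intros u G L m e H.
  - simpl in H. rewrite lift_0 in H. inversion H; subst.
    exists (csum (cpop G0) D). do 2 eexists. split.
    econstructor. constructor. eauto. eauto. eauto. apply ceq_refl.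
  - rewrite plugS_app in H. rewrite length_app in H; simpl in H.
    replace (lift (length S + 1) 0 u) with (lift (length S) 0 (lift 1 0 u)) in H by apply lift_lift.
    inversion H; subst.
    match goal with Hx : lty _ (plugS S _) _ _ _ |- _ =>
      destruct (IHS _ _ _ _ _ Hx) as (G1' & m1 & e1 & A1 & A2) end.
    inversion A1; subst.
    match goal with Hx : mty _ (lift 1 0 u) _ _ _ |- _ =>
      destruct (unlift_mty _ _ _ _ _ _ _ Hx) as [B1 B2] end.
    match goal with
      Hx : lty ?Gi (plugS S (Lam t)) (Arr ?M L) _ _,
      Hy : mty ?Ki (lift 1 0 u) _ _ _,
      Hz : mty ?Do x _ _ _,
      Hm : meq _ (?G1 0 ++ [Tn]) |- _ =>
      assert (K0 : Ki 0 = []) by (apply B1; lia);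
      rewrite plugS_app;
      exists (csum (csum (cpop Gi) Do) (rem 1 0 Ki)); do 2 eexists; split
    end.
    econstructor. econstructor. eassumption. eassumption.
    eapply meq_trans_perm. eassumption.
    intros x0; rewrite !cnt_app; rewrite <- (A2 0 x0); unfold csum; rewrite K0, app_nil_r; reflexivity.
    exact B2. eassumption.
    intros k x0; unfold csum, cpop, rem; simpl; rewrite Nat.add_1_r.
    rewrite !cnt_app; pose proof (A2 (Datatypes.S k) x0) as Z; unfold csum in Z; rewrite cnt_app in Z; lia.
Qed.

Lemma gcv_aux : forall S b x G L m e, lty G (plugS S (lift (length S) 0 x)) L m e ->
  exists T C m1 e1 m2 e2, lty T x L m1 e1 /\ lty C (plugS S (Lam b)) Tn m2 e2 /\ ceq G (csum T C).
Proof.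
  intros S b. induction S as [|s S IHS] using rev_ind; intros x G L m e H.
  - simpl in H. rewrite lift_0 in H.
    exists G, cempty. do 4 eexists. split. eauto. split. simpl. constructor.
    intros k x0. unfold csum, cempty. rewrite app_nil_r. reflexivity.
  - rewrite plugS_app in H. rewrite length_app in H; simpl in H.
    replace (lift (length S + 1) 0 x) with (lift (length S) 0 (lift 1 0 x)) in H by apply lift_lift.
    inversion H; subst.
    match goal with Hx : lty _ (plugS S _) _ _ _ |- _ =>
      destruct (IHS _ _ _ _ _ Hx) as (T1 & C1 & m1 & e1 & m2 & e2 & A1 & A2 & A3) end.
    destruct (unlift _ _ _ _ _ _ _ A1) as [B1 B2].
    assert (K0 : T1 0 = []) by (apply B1; lia).
    match goal with
      Hz : mty ?Do s _ _ _,
      Hm : meq _ (?G1 0 ++ [Tn]) |- _ =>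
      exists (rem 1 0 T1), (csum (cpop C1) Do)
    end.
    do 4 eexists. split. exact B2. split.
    rewrite plugS_app. econstructor. exact A2. eassumption.
    eapply meq_trans_perm. eassumption.
    intros x0; rewrite !cnt_app; rewrite (A3 0 x0); unfold csum; rewrite K0; reflexivity.
    intros k x0; unfold csum, cpop, rem; simpl; rewrite Nat.add_1_r.
    rewrite !cnt_app; pose proof (A3 (Datatypes.S k) x0) as Z; unfold csum in Z; rewrite cnt_app in Z; lia.
Qed.

Lemma exp_gcv : forall S t v, is_value v -> occurs 0 t = false ->
  Exp (Es t (plugS S v)) (plugS S (lift (length S) 0 (lower 0 t))).
Proof.
  intros S t v [b Hb] Ho G L m e H. subst v.
  destruct (gcv_aux S b _ _ _ _ _ H) as (T & C & m1 & e1 & m2 & e2 & A1 & A2 & A3).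
  pose proof (proj1 ins_lift _ _ _ _ _ A1 0) as B. rewrite lift_lower in B by exact Ho.
  exists (csum (cpop (ins 0 T)) (csum C cempty)). do 2 eexists. split.
  econstructor. exact B. econstructor. exact A2. constructor. exact meq_nn.
  intros k x0. unfold csum, cpop, ins, cempty. simpl. rewrite Nat.sub_0_r.
  rewrite !cnt_app, (A3 k x0). unfold csum. rewrite !cnt_app. simpl. lia.
Qed.

Lemma csum_cempty_l G : csum cempty G = G.
Proof. fext. reflexivity. Qed.
Lemma csum_assoc A B C : csum (csum A B) C = csum A (csum B C).
Proof. fext. unfold csum. symmetry; apply app_assoc. Qed.

Lemma mty_app : forall G1 t M1 m1 e1, mty G1 t M1 m1 e1 -> forall G2 M2 m2 e2, mty G2 t M2 m2 e2 ->
  exists m e, mty (csum G1 G2) t (M1 ++ M2) m e.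
Proof.
  intros G1 t M1 m1 e1 H. induction H; intros G2 M2 m2 e2 H2.
  - rewrite csum_cempty_l. simpl. eauto.
  - destruct (IHmty _ _ _ _ H2) as (m3 & e3 & H3).
    rewrite csum_assoc. simpl. do 2 eexists. constructor; eauto.
Qed.

Lemma mty_split : forall M1 M2 G t m e, mty G t (M1 ++ M2) m e ->
  exists G1 G2 m1 e1 m2 e2, mty G1 t M1 m1 e1 /\ mty G2 t M2 m2 e2 /\ G = csum G1 G2.
Proof.
  induction M1; intros M2 G t m e H; simpl in H.
  - exists cempty, G. do 4 eexists. split. constructor. split. eauto. rewrite csum_cempty_l; auto.
  - inversion H; subst.
    match goal with Hx : mty _ _ (M1 ++ M2) _ _ |- _ =>
      destruct (IHM1 _ _ _ _ _ Hx) as (G1 & G2 & m1 & e1 & m2 & e2 & A1 & A2 & A3) end.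
    subst. match goal with Hx : lty ?G0 t a _ _ |- _ => exists (csum G0 G1) end.
    exists G2. do 4 eexists. split. econstructor; eauto. split. eauto.
    rewrite csum_assoc. reflexivity.
Qed.

Definition SplitL W := forall G r L m e, lty G (plugW W r) L m e ->
  exists Mh Gh Gr mh eh, mty Gh r Mh mh eh /\ ceq G (csum Gr (popn (bdepth W) Gh)) /\
  ((forall k, k < bdepth W -> Gh k = []) -> forall r' Gh' m' e', mty Gh' r' Mh m' e' ->
    (forall k, k < bdepth W -> Gh' k = []) ->
    exists G' m'' e'', lty G' (plugW W r') L m'' e'' /\ ceq G' (csum Gr (popn (bdepth W) Gh'))).

Definition SplitM W := forall G r M m e, mty G (plugW W r) M m e ->
  exists Mh Gh Gr mh eh, mty Gh r Mh mh eh /\ ceq G (csum Gr (popn (bdepth W) Gh)) /\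
  ((forall k, k < bdepth W -> Gh k = []) -> forall r' Gh' m' e', mty Gh' r' Mh m' e' ->
    (forall k, k < bdepth W -> Gh' k = []) ->
    exists G' m'' e'', mty G' (plugW W r') M m'' e'' /\ ceq G' (csum Gr (popn (bdepth W) Gh'))).

Lemma splitLM W : SplitL W -> SplitM W.
Proof.
  intros HL G r M m e H. remember (plugW W r) as t eqn:Et. induction H; subst.
  - exists [], cempty, cempty, 0, 0. split. constructor. split.
    intros k x; reflexivity.
    intros _ r' Gh' m' e' H' _. inversion H'; subst.
    exists cempty, 0, 0. split. constructor. intros k x; reflexivity.
  - destruct (HL _ _ _ _ _ H) as (Mh1 & Gh1 & Gr1 & mh1 & eh1 & A1 & A2 & A3).
    destruct IHmty as (Mh2 & Gh2 & Gr2 & mh2 & eh2 & B1 & B2 & B3); auto.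
    destruct (mty_app _ _ _ _ _ A1 _ _ _ _ B1) as (mh & eh & C).
    exists (Mh1 ++ Mh2), (csum Gh1 Gh2), (csum Gr1 Gr2), mh, eh. split. exact C. split.
    intros k x. pose proof (A2 k x). pose proof (B2 k x). unfold csum, popn in *.
    rewrite !cnt_app in *. lia.
    intros He r' Gh' mm ee H' He'.
    destruct (mty_split _ _ _ _ _ _ H') as (G1 & G2 & m1 & e1 & m2 & e2 & D1 & D2 & D3). subst Gh'.
    destruct (A3 (fun k Hk => proj1 (app_eq_nil _ _ (He k Hk))) _ _ _ _ D1
                 (fun k Hk => proj1 (app_eq_nil _ _ (He' k Hk)))) as (G1' & m1' & e1' & E1 & E2).
    destruct (B3 (fun k Hk => proj2 (app_eq_nil _ _ (He k Hk))) _ _ _ _ D2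
                 (fun k Hk => proj2 (app_eq_nil _ _ (He' k Hk)))) as (G2' & m2' & e2' & F1 & F2).
    exists (csum G1' G2'). do 2 eexists. split. constructor; eauto.
    intros k x. pose proof (E2 k x). pose proof (F2 k x). unfold csum, popn in *.
    rewrite !cnt_app in *. lia.
Qed.

Lemma split_all : forall W, SplitL W.
Proof.
  induction W; intros G r L m e H; simpl in H |- *.
  - exists [L], (csum G cempty), cempty. do 2 eexists. split. econstructor. eauto. constructor.
    split. intros k x. unfold csum, popn, cempty. rewrite Nat.add_0_r. simpl. rewrite app_nil_r. reflexivity.
    intros _ r' Gh' mm ee H' _. inversion H'; subst.
    match goal with Hx : mty _ _ [] _ _ |- _ => inversion Hx; subst end.
    match goal with Hx : lty ?G0 r' L _ _ |- _ => exists G0 end. do 2 eexists. split. eauto.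
    intros k x. unfold csum, popn, cempty. rewrite Nat.add_0_r. simpl. rewrite !app_nil_r. reflexivity.
  - inversion H; subst.
    match goal with Hx : lty _ (plugW W _) _ _ _ |- _ =>
      destruct (IHW _ _ _ _ _ Hx) as (Mh & Gh & Gr1 & mh & eh & A1 & A2 & A3) end.
    match goal with Hz : mty ?Do t _ _ _ |- _ => exists Mh, Gh, (csum Gr1 Do), mh, eh end.
    split. auto. split.
    intros k x. pose proof (A2 k x). unfold csum, popn in *. rewrite !cnt_app in *. lia.
    intros He r' Gh' mm ee H' He'.
    destruct (A3 He _ _ _ _ H' He') as (G1' & m1 & e1 & B1 & B2).
    exists (csum G1' D). do 2 eexists. split. econstructor; eauto.
    intros k x. pose proof (B2 k x). unfold csum, popn in *. rewrite !cnt_app in *. lia.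
  - inversion H; subst.
    match goal with Hx : mty _ (plugW W _) _ _ _ |- _ =>
      destruct (splitLM W IHW _ _ _ _ _ Hx) as (Mh & Gh & Gr1 & mh & eh & A1 & A2 & A3) end.
    match goal with Hz : lty ?Go t _ _ _ |- _ => exists Mh, Gh, (csum Go Gr1), mh, eh end.
    split. auto. split.
    intros k x. pose proof (A2 k x). unfold csum, popn in *. rewrite !cnt_app in *. lia.
    intros He r' Gh' mm ee H' He'.
    destruct (A3 He _ _ _ _ H' He') as (D' & m1 & e1 & B1 & B2).
    exists (csum G0 D'). do 2 eexists. split. econstructor; eauto.
    intros k x. pose proof (B2 k x). unfold csum, popn in *. rewrite !cnt_app in *. lia.
  - inversion H; subst.
    match goal with Hx : mty _ (plugW W _) _ _ _ |- _ =>
      destruct (splitLM W IHW _ _ _ _ _ Hx) as (Mh & Gh & Gr1 & mh & eh & A1 & A2 & A3) end.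
    match goal with Hz : lty ?Go t _ _ _ |- _ => exists Mh, Gh, (csum (cpop Go) Gr1), mh, eh end.
    split. auto. split.
    intros k x. pose proof (A2 k x). unfold csum, popn in *. rewrite !cnt_app in *. lia.
    intros He r' Gh' mm ee H' He'.
    destruct (A3 He _ _ _ _ H' He') as (D' & m1 & e1 & B1 & B2).
    exists (csum (cpop G0) D'). do 2 eexists. split. econstructor; eauto.
    intros k x. pose proof (B2 k x). unfold csum, popn in *. rewrite !cnt_app in *. lia.
  - inversion H; subst.
    match goal with Hx : lty _ (plugW W _) _ _ _ |- _ =>
      destruct (IHW _ _ _ _ _ Hx) as (Mh & Gh & Gr1 & mh & eh & A1 & A2 & A3) end.
    match goal with Hz : mty ?Do t _ _ _ |- _ => exists Mh, Gh, (csum (cpop Gr1) Do), mh, eh end.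
    split. auto. split.
    intros k x. pose proof (A2 (Datatypes.S k) x). unfold csum, popn, cpop in *. simpl in *.
    rewrite Nat.add_succ_r. rewrite !cnt_app in *. lia.
    intros He r' Gh' mm ee H' He'.
    destruct (A3 (fun k Hk => He k (le_S _ _ Hk)) _ _ _ _ H' (fun k Hk => He' k (le_S _ _ Hk)))
      as (G1' & m1 & e1 & B1 & B2).
    exists (csum (cpop G1') D). do 2 eexists. split. econstructor; eauto.
    eapply meq_trans_perm. eassumption.
    intros x. pose proof (A2 0 x). pose proof (B2 0 x). unfold csum, popn in *. simpl in *.
    rewrite He, He' in * by lia. rewrite !cnt_app in *. simpl in *. lia.
    intros k x. pose proof (B2 (Datatypes.S k) x). unfold csum, popn, cpop in *. simpl in *.
    rewrite Nat.add_succ_r. rewrite !cnt_app in *. lia.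
Qed.

Lemma mty_var : forall d Mx, exists m e, mty (csingle d Mx) (Var d) Mx m e.
Proof.
  intros d. induction Mx as [|L Mx IH].
  - replace (csingle d []) with cempty by (fext; unfold csingle, cempty; nat_cases).
    do 2 eexists; constructor.
  - destruct IH as (m & e & IH).
    replace (csingle d (L :: Mx)) with (csum (csingle d [L]) (csingle d Mx))
      by (fext; unfold csum, csingle; nat_cases).
    do 2 eexists; constructor. constructor. eauto.
Qed.

Lemma exp_e : forall W u,
  Exp (Es (plugW W (Var (bdepth W))) u) (Es (plugW W (lift (S (bdepth W)) 0 u)) u).
Proof.
  intros W u G L m e H. inversion H; subst.
  match goal with Hx : lty ?G1 (plugW W _) _ _ _ |- _ =>
    destruct (split_all W _ _ _ _ _ Hx) as (Mh & Gh & Gr & mh & eh & A1 & A2 & A3) end.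
  destruct (unlift_mty _ _ _ _ _ _ _ A1) as [B1 B2].
  destruct (mty_var (bdepth W) Mh) as (mv & ev & V).
  destruct (A3 (fun k Hk => B1 k (Nat.le_0_l k) ltac:(lia)) _ _ _ _ V
               ltac:(intros k Hk; unfold csingle; nat_cases)) as (G0' & m1 & e1 & C1 & C2).
  match goal with Hz : mty D u _ _ _ |- _ =>
    destruct (mty_app _ _ _ _ _ Hz _ _ _ _ B2) as (mu & eu & D1);
    exists (csum (cpop G0') (csum D (rem (S (bdepth W)) 0 Gh))) end.
  do 2 eexists. split. econstructor. exact C1. exact D1.
  eapply meq_trans_perm. apply meq_app. eassumption.
  intros x. pose proof (A2 0 x). pose proof (C2 0 x). unfold csum, popn, csingle in *. simpl in *.
  rewrite Nat.eqb_refl in *. rewrite B1 in * by lia. rewrite !cnt_app in *. simpl in *. lia.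
  intros k x. pose proof (A2 (Datatypes.S k) x). pose proof (C2 (Datatypes.S k) x).
  unfold csum, popn, csingle, cpop, rem in *. cbv beta in *.
  destruct (Datatypes.S k + bdepth W =? bdepth W) eqn:EE; [apply Nat.eqb_eq in EE; lia|]. simpl in *.
  rewrite Nat.add_succ_r. rewrite !cnt_app in *. simpl in *. lia.
Qed.

Lemma exp_root : forall r r', root r r' -> Exp r r'.
Proof.
  intros r r' H. destruct H.
  - apply exp_m.
  - apply exp_e.
  - apply exp_gcv; auto.
Qed.

Lemma exp_ctx : forall W r r', Exp r r' -> Exp (plugW W r) (plugW W r').
Proof.
  induction W; intros r r' HE G L m e H; simpl in *.
  - eauto.
  - inversion H; subst.
    match goal with Hx : lty _ (plugW W _) _ _ _ |- _ =>
      destruct (IHW _ _ HE _ _ _ _ Hx) as (G1' & m1 & e1 & A1 & A2) end.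
    exists (csum G1' D). do 2 eexists. split. econstructor; eauto.
    intros k x. pose proof (A2 k x). unfold csum in *. rewrite !cnt_app in *. lia.
  - inversion H; subst.
    match goal with Hx : mty _ (plugW W _) _ _ _ |- _ =>
      destruct (Exp_m _ _ (IHW _ _ HE) _ _ _ _ Hx) as (D' & m1 & e1 & A1 & A2) end.
    exists (csum G0 D'). do 2 eexists. split. econstructor; eauto.
    intros k x. pose proof (A2 k x). unfold csum in *. rewrite !cnt_app in *. lia.
  - inversion H; subst.
    match goal with Hx : mty _ (plugW W _) _ _ _ |- _ =>
      destruct (Exp_m _ _ (IHW _ _ HE) _ _ _ _ Hx) as (D' & m1 & e1 & A1 & A2) end.
    exists (csum (cpop G0) D'). do 2 eexists. split. econstructor; eauto.
    intros k x. pose proof (A2 k x). unfold csum in *. rewrite !cnt_app in *. lia.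
  - inversion H; subst.
    match goal with Hx : lty _ (plugW W _) _ _ _ |- _ =>
      destruct (IHW _ _ HE _ _ _ _ Hx) as (G1' & m1 & e1 & A1 & A2) end.
    exists (csum (cpop G1') D). do 2 eexists. split. econstructor. eauto. eauto.
    eapply meq_trans_perm. eassumption. intros x. rewrite !cnt_app, (A2 0 x). reflexivity.
    intros k x. pose proof (A2 (Datatypes.S k) x). unfold csum, cpop in *. rewrite !cnt_app in *. lia.
Qed.

Lemma exp_step : forall t t', wstep t t' -> Exp t t'.
Proof.
  intros t t' (W & r & r' & H1 & H2 & H3). subst. apply exp_ctx, exp_root; auto.
Qed.

Lemma exp_star : forall t nf, wstar t nf -> forall G L m e, lty G nf L m e ->
  exists G' m' e', lty G' t L m' e'.
Proof.
  intros t nf H. induction H; intros G L m e Ht.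
  - eauto.
  - destruct (IHwstar _ _ _ _ Ht) as (G1 & m1 & e1 & A).
    destruct (exp_step _ _ H _ _ _ _ A) as (G2 & m2 & e2 & B & _). eauto.
Qed.

Definition ans t := exists S b, t = plugS S (Lam b).
Definition occP (G : tctx) t := forall k, G k <> [] -> exists W, t = plugW W (Var (k + bdepth W)).

Lemma ans_cases : forall S b, plugS S (Lam b) = Lam b \/
  exists S' c, plugS S (Lam b) = Es (plugS S' (Lam b)) c.
Proof.
  intros S b. destruct S as [|s S] using rev_ind. auto.
  right. rewrite plugS_app. eauto.
Qed.

Lemma ans_Es a c : ans (Es a c) -> ans a.
Proof.
  intros (S & b & H). destruct (ans_cases S b) as [E | (S' & c' & E)]; rewrite E in H.
  discriminate. inversion H; subst. exists S', b; auto.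
Qed.
Lemma ans_Es' a c : ans a -> ans (Es a c).
Proof. intros (S & b & H). exists (S ++ [c]), b. rewrite plugS_app. subst; auto. Qed.
Lemma ans_Var x : ~ ans (Var x).
Proof. intros (S & b & H). destruct (ans_cases S b) as [E | (S' & c' & E)]; rewrite E in H; discriminate. Qed.
Lemma ans_App a c : ~ ans (App a c).
Proof. intros (S & b & H). destruct (ans_cases S b) as [E | (S' & c' & E)]; rewrite E in H; discriminate. Qed.

Lemma wn_sub : forall W t, wnormal (plugW W t) -> wnormal t.
Proof.
  intros W t H (t' & W' & r & r' & H1 & H2 & H3). apply H.
  assert (forall W1 W2 x, plugW W1 (plugW W2 x) = plugW (
    (fix comp W1 := match W1 with
      | WHole => W2
      | WAppL W0 u => WAppL (comp W0) u
      | WAppR u W0 => WAppR u (comp W0)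
      | WEsArg u W0 => WEsArg u (comp W0)
      | WEsBody W0 u => WEsBody (comp W0) u end) W1) x) as HC.
  { intros W1 W2 x. induction W1; simpl; f_equal; auto. }
  eexists. exists (
    (fix comp W1 := match W1 with
      | WHole => W'
      | WAppL W0 u => WAppL (comp W0) u
      | WAppR u W0 => WAppR u (comp W0)
      | WEsArg u W0 => WEsArg u (comp W0)
      | WEsBody W0 u => WEsBody (comp W0) u end) W), r, r'.
  split. auto. split. subst. apply HC. reflexivity.
Qed.

Lemma nn_ctx G : forall k, csum G cempty k = G k.
Proof. intros k. unfold csum, cempty. apply app_nil_r. Qed.

Lemma es_typ : forall a c Ga L ma ea Gc mc ec,
  wnormal (Es a c) -> lty Ga a L ma ea -> occP Ga a -> lty Gc c Tn mc ec -> occP Gc c ->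
  exists G m e, lty G (Es a c) L m e /\ occP G (Es a c).
Proof.
  intros a c Ga L ma ea Gc mc ec Hn Ha Oa Hc Oc.
  assert (Z : Ga 0 = []).
  { destruct (classic (Ga 0 = [])) as [E|E]; auto. exfalso.
    destruct (Oa 0 E) as [W EW]. apply Hn. subst a. simpl.
    eexists. exists WHole. do 2 eexists. split. apply root_e. split; reflexivity. }
  exists (csum (cpop Ga) (csum Gc cempty)). do 2 eexists. split.
  econstructor. eauto. econstructor. eauto. constructor. rewrite Z. exact meq_nn.
  intros k Hk. unfold csum at 1 in Hk. rewrite nn_ctx in Hk.
  destruct (cpop Ga k) eqn:E1.
  - simpl in Hk. destruct (Oc k Hk) as [W EW]. exists (WEsArg a W). simpl. rewrite EW. reflexivity.
  - assert (Ga (Datatypes.S k) <> []) by (unfold cpop in E1; rewrite E1; discriminate).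
    destruct (Oa _ H) as [W EW]. exists (WEsBody W c). simpl. rewrite EW.
    do 3 f_equal. lia.
Qed.

Lemma nf_typ : forall t, wnormal t ->
  (ans t -> exists G m e, lty G t Tn m e /\ occP G t) /\
  (~ ans t -> forall L, exists G m e, lty G t L m e /\ occP G t).
Proof.
  induction t; intros Hn; split; intros Ha.
  - exfalso. apply (ans_Var _ Ha).
  - intros L. exists (csingle n [L]). do 2 eexists. split. constructor.
    intros k Hk. unfold csingle in Hk. destruct (k =? n) eqn:E; [|congruence].
    apply Nat.eqb_eq in E. subst. exists WHole. simpl. rewrite Nat.add_0_r. reflexivity.
  - exists cempty. do 2 eexists. split. constructor. intros k Hk. exfalso; apply Hk; reflexivity.
  - exfalso. apply Ha. exists [], t. reflexivity.
  - exfalso. apply (ans_App _ _ Ha).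
  - intros L.
    assert (N1 : wnormal t1) by (apply (wn_sub (WAppL WHole t2)); exact Hn).
    assert (N2 : wnormal t2) by (apply (wn_sub (WAppR t1 WHole)); exact Hn).
    assert (A1 : ~ ans t1).
    { intros (S & b & E). apply Hn. subst t1. eexists. exists WHole. do 2 eexists.
      split. apply (root_m S b t2). split; reflexivity. }
    destruct (proj2 (IHt1 N1) A1 (Arr [] L)) as (G1 & m1 & e1 & B1 & O1).
    assert (C : exists G2 m2 e2, lty G2 t2 Tn m2 e2 /\ occP G2 t2).
    { destruct (classic (ans t2)). apply (proj1 (IHt2 N2)); auto. apply (proj2 (IHt2 N2)); auto. }
    destruct C as (G2 & m2 & e2 & C1 & O2).
    exists (csum G1 (csum G2 cempty)). do 2 eexists. split.
    econstructor. eauto. econstructor. eauto. constructor. exact meq_nn.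
    intros k Hk. unfold csum at 1 in Hk. rewrite nn_ctx in Hk.
    destruct (G1 k) eqn:E1.
    + simpl in Hk. destruct (O2 k Hk) as [W EW]. exists (WAppR t1 W). simpl. rewrite EW. reflexivity.
    + assert (G1 k <> []) by (rewrite E1; discriminate).
      destruct (O1 _ H) as [W EW]. exists (WAppL W t2). simpl. rewrite EW. reflexivity.
  - assert (N1 : wnormal t1) by (apply (wn_sub (WEsBody WHole t2)); exact Hn).
    assert (N2 : wnormal t2) by (apply (wn_sub (WEsArg t1 WHole)); exact Hn).
    destruct (proj1 (IHt1 N1) (ans_Es _ _ Ha)) as (G1 & m1 & e1 & B1 & O1).
    assert (C : exists G2 m2 e2, lty G2 t2 Tn m2 e2 /\ occP G2 t2).
    { destruct (classic (ans t2)). apply (proj1 (IHt2 N2)); auto. apply (proj2 (IHt2 N2)); auto. }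
    destruct C as (G2 & m2 & e2 & C1 & O2).
    eapply es_typ; eauto.
  - intros L.
    assert (N1 : wnormal t1) by (apply (wn_sub (WEsBody WHole t2)); exact Hn).
    assert (N2 : wnormal t2) by (apply (wn_sub (WEsArg t1 WHole)); exact Hn).
    assert (A1 : ~ ans t1) by (intros X; apply Ha, ans_Es'; auto).
    destruct (proj2 (IHt1 N1) A1 L) as (G1 & m1 & e1 & B1 & O1).
    assert (C : exists G2 m2 e2, lty G2 t2 Tn m2 e2 /\ occP G2 t2).
    { destruct (classic (ans t2)). apply (proj1 (IHt2 N2)); auto. apply (proj2 (IHt2 N2)); auto. }
    destruct C as (G2 & m2 & e2 & C1 & O2).
    eapply es_typ; eauto.
Qed.

Theorem theorem6p5 : forall t nf : term,
  wstar t nf -> wnormal nf ->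
  exists (G : tctx) (m e : nat), lty G t Tn m e.
Proof.
  intros t nf Hs Hn.
  assert (C : exists G m e, lty G nf Tn m e).
  { destruct (classic (ans nf)).
    - destruct (proj1 (nf_typ nf Hn) H) as (G & m & e & A & _). eauto.
    - destruct (proj2 (nf_typ nf Hn) H Tn) as (G & m & e & A & _). eauto. }
  destruct C as (G & m & e & A). eapply exp_star; eauto.
Qed.
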